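(* Let $\bar R_m(\varepsilon)$ be defined by $\bar R_1(\varepsilon)=\varepsilon$ and, for $m\ge2$, $\big[(-1)^m(1+\varepsilon)^m+(1+\varepsilon)\big]\bar R_m(\varepsilon)=-(3+\varepsilon)\sum_{j=1}^{m-1}\bar R_j(\varepsilon)\bar R_{m-j}(\varepsilon)$. Write the expansions at $\varepsilon=0$ as $$\bar R_{2m+1}(\varepsilon)=\varepsilon^{m+1}\big(a_m+b_m\varepsilon+O(\varepsilon^2)\big)\ (m\ge0),\qquad \bar R_{2n}(\varepsilon)=\varepsilon^{n+1}\big(c_n+d_n\varepsilon+O(\varepsilon^2)\big)\ (n\ge1).$$ Then, for $|\tau|<1/3$, $$\sum_{m\ge0}b_m\tau^{2m+1}=-\frac{\tau\big(45\tau^2-33\log(1+9\tau^2)\big)}{24\,(1+9\tau^2)^{3/2}},\qquad \sum_{n\ge1}d_n\tau^{2n}=\frac{\tau^2\big(14+36\tau^2-33\log(1+9\tau^2)\big)}{8\,(1+9\tau^2)^2}.$$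
   Context: The $\bar R_m$ are the coefficient functions of the transseries solution of the static logistic map $y(n+1)=(3+\varepsilon)y(n)(1-y(n))$ about its fixed point $(2+\varepsilon)/(3+\varepsilon)$, normalised by $\bar R_1=\varepsilon$; each $\bar R_m$ is a rational function of $\varepsilon$ analytic at $0$ with the stated orders of vanishing. $\log$ denotes the real natural logarithm. *)

(* Defs.v *)
From Stdlib Require Import Reals Arith.
From Coquelicot Require Import Coquelicot.
Open Scope R_scope.

Definition Dden (m : nat) (e : R) : R := (-1) ^ m * (1 + e) ^ m + (1 + e).

(* Rtab n e k = Rbar_k(e) for 1 <= k <= n+1 (computed by the recursion). *)
Fixpoint Rtab (n : nat) (e : R) : nat -> R :=
  match n with
  | O => fun _ => e
  | S n' =>
      let f := Rtab n' e in
      let m := (n' + 2)%nat in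
      fun k =>
        if Nat.eqb k m then
          - (3 + e) * sum_f_R0 (fun i => f (i + 1)%nat * f (m - 1 - i)%nat) (m - 2)
            / Dden m e
        else f k
  end.

(* RbarL m e, for m >= 1 and eps with Dden k eps <> 0 for 2 <= k <= m
   (e.g. 0 < |eps| < 1):  RbarL 1 e = e and
   Dden m e * RbarL m e = -(3+e) * sum_{j=1}^{m-1} RbarL j e * RbarL (m-j) e. *)
Definition RbarL (m : nat) (e : R) : R := Rtab (m - 1) e m.

Definition expansion2 (f : R -> R) (k : nat) (a b : R) : Prop :=
  exists C delta : R, 0 < delta /\
    forall e : R, 0 < Rabs e < delta ->
      Rabs (f e - e ^ k * (a + b * e)) <= C * Rabs e ^ (k + 2).

(* Main.v *)
Require Import Defs.
From Stdlib Require Import Reals.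
From Coquelicot Require Import Coquelicot.
Open Scope R_scope.
From Stdlib Require Import Lra Lia Psatz.

Definition jet (f : R -> R) (k : nat) (a b : R) : Prop :=
  exists C delta : R, 0 < delta /\
    forall e : R, 0 < Rabs e < delta ->
      exists h, Rabs h <= C /\ f e = e ^ k * (a + b * e + e ^ 2 * h).

Lemma jet_expansion2 f k a b : jet f k a b -> expansion2 f k a b.
Proof.
  intros [C [d [Hd H]]]. exists C, d. split; auto.
  intros e He. destruct (H e He) as [h [Hh Hf]]. rewrite Hf.
  replace (e ^ k * (a + b * e + e ^ 2 * h) - e ^ k * (a + b * e)) with (h * e ^ (k+2)).
  2:{ rewrite pow_add. ring. }
  rewrite Rabs_mult, <- RPow_abs. apply Rmult_le_compat_r; auto.
  apply pow_le, Rabs_pos.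
Qed.

Lemma jet_ext f g k a b : (forall e, f e = g e) -> jet g k a b -> jet f k a b.
Proof.
  intros E [C [d [Hd H]]]. exists C, d. split; auto. intros e He.
  destruct (H e He) as [h [Hh Hf]]. exists h. rewrite E. auto.
Qed.

Lemma jet_coef f k a b a' b' : a = a' -> b = b' -> jet f k a b -> jet f k a' b'.
Proof. intros -> ->; auto. Qed.

Lemma jet_ord f k k' a b : k = k' -> jet f k a b -> jet f k' a b.
Proof. intros ->; auto. Qed.

Lemma jet_exact f k a b : (forall e, f e = e ^ k * (a + b * e)) -> jet f k a b.
Proof.
  intros E. exists 0, 1. split; [lra|]. intros e He. exists 0. split.
  rewrite Rabs_R0; lra. rewrite E. ring.
Qed.

Lemma Rabs_small e : Rabs e < 1 -> Rabs e <= 1.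
Proof. lra. Qed.

Lemma jet_add f g k a b c d : jet f k a b -> jet g k c d ->
  jet (fun e => f e + g e) k (a + c) (b + d).
Proof.
  intros [C1 [d1 [Hd1 H1]]] [C2 [d2 [Hd2 H2]]].
  exists (C1 + C2), (Rmin d1 d2). split. apply Rmin_pos; auto.
  intros e He.
  destruct (H1 e) as [h1 [Hh1 E1]]. split. apply He. eapply Rlt_le_trans. apply He. apply Rmin_l.
  destruct (H2 e) as [h2 [Hh2 E2]]. split. apply He. eapply Rlt_le_trans. apply He. apply Rmin_r.
  exists (h1 + h2). split. eapply Rle_trans. apply Rabs_triang. lra.
  rewrite E1, E2. ring.
Qed.

Lemma jet_scal f k a b c : jet f k a b -> jet (fun e => c * f e) k (c * a) (c * b).
Proof.
  intros [C1 [d1 [Hd1 H1]]].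
  exists (Rabs c * C1), d1. split; auto. intros e He.
  destruct (H1 e He) as [h1 [Hh1 E1]].
  exists (c * h1). split. rewrite Rabs_mult. apply Rmult_le_compat_l; auto. apply Rabs_pos.
  rewrite E1. ring.
Qed.

Lemma Rabs_triang4 x y z w : Rabs (x + y + z + w) <= Rabs x + Rabs y + Rabs z + Rabs w.
Proof.
  eapply Rle_trans. apply Rabs_triang. apply Rplus_le_compat_r.
  eapply Rle_trans. apply Rabs_triang. apply Rplus_le_compat_r. apply Rabs_triang.
Qed.

Lemma jet_mul f g k l a b c d : jet f k a b -> jet g l c d ->
  jet (fun e => f e * g e) (k + l) (a * c) (a * d + b * c).
Proof.
  intros [C1 [d1 [Hd1 H1]]] [C2 [d2 [Hd2 H2]]].
  exists (Rabs b * Rabs d + (Rabs a + Rabs b) * Rabs C2 + Rabs C1 * (Rabs c + Rabs d) + Rabs C1 * Rabs C2),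
    (Rmin 1 (Rmin d1 d2)).
  split. apply Rmin_pos; [lra| apply Rmin_pos; auto].
  intros e He.
  assert (Hm1 := Rmin_l 1 (Rmin d1 d2)). assert (Hm2 := Rmin_r 1 (Rmin d1 d2)).
  assert (Hm3 := Rmin_l d1 d2). assert (Hm4 := Rmin_r d1 d2).
  destruct (H1 e) as [h1 [Hh1 E1]]. split. apply He. lra.
  destruct (H2 e) as [h2 [Hh2 E2]]. split. apply He. lra.
  exists (b * d + (a + b * e) * h2 + h1 * (c + d * e) + e ^ 2 * h1 * h2).
  split.
  - assert (He1 : Rabs e <= 1) by lra.
    assert (Hp : Rabs (e ^ 2) <= 1). { rewrite <- RPow_abs. simpl. assert (0 <= Rabs e) by apply Rabs_pos. nra. }
    assert (Hab : Rabs (a + b * e) <= Rabs a + Rabs b).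
    { eapply Rle_trans. apply Rabs_triang. rewrite Rabs_mult.
      assert (0 <= Rabs b) by apply Rabs_pos. assert (0 <= Rabs e) by apply Rabs_pos. nra. }
    assert (Hcd : Rabs (c + d * e) <= Rabs c + Rabs d).
    { eapply Rle_trans. apply Rabs_triang. rewrite Rabs_mult.
      assert (0 <= Rabs d) by apply Rabs_pos. assert (0 <= Rabs e) by apply Rabs_pos. nra. }
    assert (HC1 : Rabs h1 <= Rabs C1) by (eapply Rle_trans; [apply Hh1| apply RRle_abs]).
    assert (HC2 : Rabs h2 <= Rabs C2) by (eapply Rle_trans; [apply Hh2| apply RRle_abs]).
    eapply Rle_trans. apply Rabs_triang4.
    repeat rewrite Rabs_mult.
    assert (0 <= Rabs h1) by apply Rabs_pos. assert (0 <= Rabs h2) by apply Rabs_pos.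
    assert (0 <= Rabs (e^2)) by apply Rabs_pos.
    assert (0 <= Rabs (a + b*e)) by apply Rabs_pos. assert (0 <= Rabs (c + d*e)) by apply Rabs_pos.
    assert (Rabs (a + b * e) * Rabs h2 <= (Rabs a + Rabs b) * Rabs C2) by (apply Rmult_le_compat; auto).
    assert (Rabs h1 * Rabs (c + d * e) <= Rabs C1 * (Rabs c + Rabs d)) by (apply Rmult_le_compat; auto).
    assert (Rabs (e ^ 2) * Rabs h1 <= Rabs C1) by nra.
    assert (Rabs (e ^ 2) * Rabs h1 * Rabs h2 <= Rabs C1 * Rabs C2) by (apply Rmult_le_compat; auto; nra).
    lra.
  - rewrite E1, E2, pow_add. ring.
Qed.

Lemma jet_shift f k a b : jet f (S k) a b -> jet f k 0 a.
Proof.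
  intros [C1 [d1 [Hd1 H1]]].
  exists (Rabs b + Rabs C1), (Rmin 1 d1). split. apply Rmin_pos; lra.
  intros e He. assert (Hm1 := Rmin_l 1 d1). assert (Hm2 := Rmin_r 1 d1).
  destruct (H1 e) as [h1 [Hh1 E1]]. split. apply He. lra.
  exists (b + e * h1). split.
  - eapply Rle_trans. apply Rabs_triang. rewrite Rabs_mult.
    assert (Rabs e * Rabs h1 <= Rabs C1).
    { assert (Rabs h1 <= Rabs C1) by (eapply Rle_trans; [apply Hh1| apply RRle_abs]).
      assert (0 <= Rabs h1) by apply Rabs_pos. nra. }
    lra.
  - rewrite E1. simpl. ring.
Qed.

Lemma jet_sum (F : nat -> R -> R) (A B : nat -> R) k n :
  (forall i, (i <= n)%nat -> jet (F i) k (A i) (B i)) ->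
  jet (fun e => sum_f_R0 (fun i => F i e) n) k (sum_f_R0 A n) (sum_f_R0 B n).
Proof.
  induction n; intros H.
  - simpl. apply H. lia.
  - simpl. apply (jet_add (fun e => sum_f_R0 (fun i => F i e) n) (F (S n))).
    apply IHn. intros; apply H; lia. apply H; lia.
Qed.

Lemma jet_div N D k j n0 n1 d0 d1 : jet N (k + j) n0 n1 -> jet D j d0 d1 -> d0 <> 0 ->
  jet (fun e => N e / D e) k (n0 / d0) ((n1 * d0 - n0 * d1) / (d0 * d0)).
Proof.
  intros [C1 [dl1 [Hd1 H1]]] [C2 [dl2 [Hd2 H2]]] Hd0.
  set (p := n0 / d0). set (q := (n1 * d0 - n0 * d1) / (d0 * d0)).
  assert (Ha0 : 0 < Rabs d0) by (apply Rabs_pos_lt; auto).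
  set (r := Rabs d0 / (2 * (Rabs d1 + Rabs C2 + 1))).
  assert (Hr : 0 < r). { unfold r. apply Rdiv_lt_0_compat; auto.
    assert (0 <= Rabs d1) by apply Rabs_pos. assert (0 <= Rabs C2) by apply Rabs_pos. lra. }
  exists ((Rabs C1 + Rabs p * Rabs C2 + Rabs q * Rabs d1 + Rabs q * Rabs C2) * (2 / Rabs d0)),
    (Rmin (Rmin 1 r) (Rmin dl1 dl2)).
  split. repeat apply Rmin_pos; lra.
  intros e He.
  assert (Hm1 := Rmin_l (Rmin 1 r) (Rmin dl1 dl2)). assert (Hm2 := Rmin_r (Rmin 1 r) (Rmin dl1 dl2)).
  assert (Hm3 := Rmin_l dl1 dl2). assert (Hm4 := Rmin_r dl1 dl2).
  assert (Hm5 := Rmin_l 1 r). assert (Hm6 := Rmin_r 1 r).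
  destruct (H1 e) as [h1 [Hh1 E1]]. split. apply He. lra.
  destruct (H2 e) as [h2 [Hh2 E2]]. split. apply He. lra.
  set (v := d0 + d1 * e + e ^ 2 * h2).
  assert (HC2 : Rabs h2 <= Rabs C2) by (eapply Rle_trans; [apply Hh2| apply RRle_abs]).
  assert (He1 : Rabs e <= 1) by lra.
  assert (Hv : Rabs d0 / 2 <= Rabs v).
  { assert (Hvd : Rabs (v - d0) <= Rabs e * (Rabs d1 + Rabs C2)).
    { unfold v. replace (d0 + d1 * e + e ^ 2 * h2 - d0) with (e * (d1 + e * h2)) by ring.
      rewrite Rabs_mult. apply Rmult_le_compat_l. apply Rabs_pos.
      eapply Rle_trans. apply Rabs_triang. rewrite Rabs_mult.
      assert (0 <= Rabs h2) by apply Rabs_pos. assert (0 <= Rabs e) by apply Rabs_pos. nra. }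
    assert (Rabs e * (Rabs d1 + Rabs C2) <= Rabs d0 / 2).
    { assert (Rabs e <= r) by lra. unfold r in H.
      assert (0 <= Rabs d1) by apply Rabs_pos. assert (0 <= Rabs C2) by apply Rabs_pos.
      assert (Rabs e * (2 * (Rabs d1 + Rabs C2 + 1)) <= Rabs d0).
      { apply (Rmult_le_compat_r (2 * (Rabs d1 + Rabs C2 + 1))) in H; [|lra].
        unfold Rdiv in H. rewrite Rmult_assoc, Rinv_l in H; lra. }
      nra. }
    assert (Rabs d0 <= Rabs v + Rabs (v - d0)).
    { replace d0 with (v - (v - d0)) at 1 by ring. eapply Rle_trans. apply Rabs_triang.
      rewrite Rabs_Ropp. lra. }
    lra. }
  assert (Hv0 : v <> 0). { intro Hz. rewrite Hz, Rabs_R0 in Hv. lra. }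
  assert (Hen : e <> 0). { intro Hz. rewrite Hz, Rabs_R0 in He. lra. }
  exists ((h1 - p * h2 - q * d1 - q * h2 * e) / v).
  split.
  - unfold Rdiv. rewrite Rabs_mult, Rabs_inv.
    assert (Hi : / Rabs v <= 2 / Rabs d0).
    { replace (2 / Rabs d0) with (/ (Rabs d0 / 2)) by (field; lra).
      apply Rinv_le_contravar; lra. }
    apply Rmult_le_compat. apply Rabs_pos. left; apply Rinv_0_lt_compat; lra.
    + assert (HC1 : Rabs h1 <= Rabs C1) by (eapply Rle_trans; [apply Hh1| apply RRle_abs]).
      unfold Rminus. eapply Rle_trans. apply Rabs_triang4. repeat rewrite Rabs_Ropp.
      repeat rewrite Rabs_mult.
      assert (Rabs p * Rabs h2 <= Rabs p * Rabs C2) by (apply Rmult_le_compat_l; auto; apply Rabs_pos).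
      assert (0 <= Rabs q) by apply Rabs_pos. assert (0 <= Rabs h2) by apply Rabs_pos.
      assert (Rabs q * Rabs h2 * Rabs e <= Rabs q * Rabs C2).
      { assert (0 <= Rabs e) by apply Rabs_pos.
        assert (Rabs q * Rabs h2 <= Rabs q * Rabs C2) by (apply Rmult_le_compat_l; auto).
        assert (0 <= Rabs q * Rabs h2) by nra. nra. }
      lra.
    + exact Hi.
  - unfold Rdiv at 1. rewrite E1, E2. fold v.
    rewrite pow_add.
    assert (Hek : e ^ j <> 0) by (apply pow_nonzero; auto).
    unfold p, q. field_simplify_eq; [|repeat split; auto].
    unfold v. ring.
Qed.

Lemma jet_pow1 n : jet (fun e => (1 + e) ^ n) 0 1 (INR n).
Proof.
  induction n.
  - apply jet_exact. intros; simpl; ring.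
  - apply (jet_ext _ (fun e => (1 + e) ^ n * (1 + e))). intros; simpl; ring.
    eapply jet_coef; [| |apply (jet_mul _ _ 0 0 1 (INR n) 1 1)]; auto.
    ring. rewrite S_INR; ring. apply jet_exact; intros; simpl; ring.
Qed.

Lemma sum_INR_lem n : sum_f_R0 INR n = INR n * (INR n + 1) / 2.
Proof.
  induction n. simpl. lra. rewrite tech5, IHn, (S_INR n). field.
Qed.

Lemma jet_Dodd p : (1 <= p)%nat ->
  jet (fun e => (1 + e) - (1 + e) ^ (S p)) 1 (- INR p) (- (INR p * INR (S p)) / 2).
Proof.
  intros Hp.
  set (G := fun e => sum_f_R0 (fun i => (1 + e) ^ i) (p - 1)).
  apply (jet_ext _ (fun e => (- (1 + e) * e) * G e)).
  { intros e. unfold G. pose proof (GP_finite (1 + e) (p - 1)) as H.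
    replace (p - 1 + 1)%nat with p in H by lia.
    replace (1 + e - 1) with e in H by ring.
    replace ((1 + e) ^ S p) with ((1 + e) * (1 + e) ^ p) by (simpl; ring).
    rewrite <- (Rplus_0_r (sum_f_R0 _ _ * _)) in H.
    assert (H' : (1 + e) ^ p = sum_f_R0 (fun n0 : nat => (1 + e) ^ n0) (p - 1) * e + 1) by lra.
    rewrite H'. ring. }
  assert (HG : jet G 0 (sum_f_R0 (fun _ => 1) (p - 1)) (sum_f_R0 INR (p - 1))).
  { unfold G. apply (jet_sum (fun i e => (1 + e) ^ i) (fun _ => 1) INR 0 (p-1)).
    intros; apply jet_pow1. }
  rewrite sum_cte, sum_INR_lem in HG.
  replace (S (p - 1)) with p in HG by lia.
  rewrite minus_INR in HG by lia. simpl INR in HG.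
  assert (Hx : jet (fun e => -(1+e)*e) 1 (-1) (-1)) by (apply jet_exact; intros; simpl; ring).
  eapply jet_ord; [|eapply jet_coef; [| |apply (jet_mul _ _ 1 0 (-1) (-1) _ _ Hx HG)]].
  - lia.
  - ring.
  - rewrite S_INR. field.
Qed.

Lemma jet_Dden_odd q : (1 <= q)%nat ->
  jet (Dden (S (2 * q))) 1 (1 - INR (S (2 * q))) (- (INR (S (2*q)) * (INR (S (2*q)) - 1)) / 2).
Proof.
  intros Hq.
  apply (jet_ext _ (fun e => (1 + e) - (1 + e) ^ (S (2 * q)))).
  { intros e. unfold Dden. rewrite pow_1_odd. ring. }
  eapply jet_coef; [| |apply jet_Dodd; lia].
  rewrite (S_INR (2*q)); ring. rewrite (S_INR (2*q)); field.
Qed.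

Lemma jet_Dden_even q :
  jet (Dden (2 * q)) 0 2 (INR (2 * q) + 1).
Proof.
  apply (jet_ext _ (fun e => (1 + e) ^ (2 * q) + (1 + e))).
  { intros e. unfold Dden. rewrite pow_1_even. ring. }
  apply (jet_coef _ _ (1 + 1) (INR (2 * q) + 1)); [ring|ring|].
  apply jet_add; [apply jet_pow1| apply (jet_exact _ 0 1 1)]. intros; simpl; ring.
Qed.

Lemma Rtab_stable e n k : (1 <= k <= n + 1)%nat -> Rtab n e k = RbarL k e.
Proof.
  induction n; intros Hk.
  - assert (k = 1)%nat by lia. subst. reflexivity.
  - destruct (Nat.eq_dec k (S n + 1)) as [E|E].
    + subst. unfold RbarL. replace (S n + 1 - 1)%nat with (S n) by lia. reflexivity.
    + cbn [Rtab]. replace (Nat.eqb k (n + 2)) with false.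
      apply IHn. lia. symmetry. apply Nat.eqb_neq. lia.
Qed.

Lemma RbarL_rec n e : RbarL (S (S n)) e =
  - (3 + e) * sum_f_R0 (fun i => RbarL (i + 1) e * RbarL (S n - i) e) n / Dden (S (S n)) e.
Proof.
  unfold RbarL at 1. replace (S (S n) - 1)%nat with (S n) by lia.
  cbn [Rtab]. replace (Nat.eqb (S (S n)) (n + 2)) with true
    by (symmetry; apply Nat.eqb_eq; lia).
  replace (n + 2 - 2)%nat with n by lia.
  f_equal. f_equal. apply sum_eq. intros i Hi.
  rewrite !Rtab_stable by lia. f_equal. f_equal. lia. f_equal. lia.
Qed.

Lemma PS_mult_inner u v n : u 0%nat = 0 -> v 0%nat = 0 ->
  PS_mult u v (S (S n)) = sum_f_R0 (fun i => u (i + 1)%nat * v (S n - i)%nat) n.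
Proof.
  intros Hu Hv. unfold PS_mult. rewrite decomp_sum by lia. rewrite Hu, Rmult_0_l, Rplus_0_l.
  simpl Nat.pred. rewrite tech5. replace (S (S n) - S (S n))%nat with 0%nat by lia.
  rewrite Hv, Rmult_0_r, Rplus_0_r. apply sum_eq. intros i Hi.
  f_equal. f_equal; lia.
Qed.

Section Main.
Variables SA SB SC SD : nat -> R.
Hypothesis hA : forall p, SA (2 * p)%nat = 0.
Hypothesis hB : forall p, SB (2 * p)%nat = 0.
Hypothesis hC : forall p, SC (S (2 * p)) = 0.
Hypothesis hD : forall p, SD (S (2 * p)) = 0.
Hypothesis hC0 : SC 0%nat = 0.
Hypothesis hD0 : SD 0%nat = 0.
Hypothesis hA1 : SA 1%nat = 1.
Hypothesis hB1 : SB 1%nat = 0.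

Definition S0f M := PS_mult SA SA M + PS_mult SA SC M + PS_mult SC SA M.
Definition S1f M := PS_mult SA SB M + PS_mult SB SA M + PS_mult SA SD M + PS_mult SD SA M
  + PS_mult SB SC M + PS_mult SC SB M + PS_mult SC SC M.
Hypothesis E0 : forall M, (1 - INR M) * SA M + 2 * SC M + 3 * S0f M = 0.
Hypothesis E1 : forall M, (1 - INR M) * SB M + 2 * SD M + S0f M + 3 * S1f M
   - INR M * (INR M - 1) / 2 * SA M + (INR M + 1) * SC M = 0.

Definition term0 j k := SA j * SA k + SA j * SC k + SC j * SA k.
Definition term1 j k := SA j * SB k + SB j * SA k + SA j * SD k + SD j * SA k
  + SB j * SC k + SC j * SB k + SC j * SC k.

Definition Pj j := jet (RbarL j) (Nat.div2 j + 1) (SA j + SC j) (SB j + SD j).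

Lemma par_cases j : (1 <= j)%nat ->
  (exists p, j = S (2 * p)) \/ (exists p, j = (2 * p)%nat /\ (1 <= p)%nat).
Proof.
  intros H. destruct (Nat.Even_or_Odd j) as [[p Hp]|[p Hp]].
  right. exists p. split; lia. left. exists p. lia.
Qed.

Lemma term_jet j k : (1 <= j)%nat -> (1 <= k)%nat -> Pj j -> Pj k ->
  jet (fun e => RbarL j e * RbarL k e) (Nat.div2 (j + k + 1) + 1) (term0 j k) (term1 j k).
Proof.
  intros Hj Hk Jj Jk. unfold Pj in *. unfold term0, term1.
  destruct (par_cases j Hj) as [[p ->]|[p [-> Hp]]];
  destruct (par_cases k Hk) as [[q ->]|[q [-> Hq]]].
  - rewrite Nat.div2_succ_double, hC, hD in Jj. rewrite Nat.div2_succ_double, hC, hD in Jk.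
    rewrite !hC, !hD.
    replace (S (2 * p) + S (2 * q) + 1)%nat with (S (2 * (p + q + 1))) by lia.
    rewrite Nat.div2_succ_double.
    eapply jet_ord; [|eapply jet_coef; [| |apply (jet_mul _ _ _ _ _ _ _ _ Jj Jk)]]; [lia|ring|ring].
  - rewrite Nat.div2_succ_double, hC, hD in Jj. rewrite Nat.div2_double, hA, hB in Jk.
    rewrite !hC, !hD, !hA, !hB.
    replace (S (2 * p) + 2 * q + 1)%nat with (2 * (p + q + 1))%nat by lia.
    rewrite Nat.div2_double.
    eapply jet_ord; [|eapply jet_coef; [| |apply (jet_mul _ _ _ _ _ _ _ _ Jj Jk)]]; [lia|ring|ring].
  - rewrite Nat.div2_double, hA, hB in Jj. rewrite Nat.div2_succ_double, hC, hD in Jk.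
    rewrite !hC, !hD, !hA, !hB.
    replace (2 * p + S (2 * q) + 1)%nat with (2 * (p + q + 1))%nat by lia.
    rewrite Nat.div2_double.
    eapply jet_ord; [|eapply jet_coef; [| |apply (jet_mul _ _ _ _ _ _ _ _ Jj Jk)]]; [lia|ring|ring].
  - rewrite Nat.div2_double, hA, hB in Jj. rewrite Nat.div2_double, hA, hB in Jk.
    rewrite !hA, !hB.
    replace (2 * p + 2 * q + 1)%nat with (S (2 * (p + q))) by lia.
    rewrite Nat.div2_succ_double.
    pose proof (jet_mul _ _ _ _ _ _ _ _ Jj Jk) as H.
    replace (p + 1 + (q + 1))%nat with (S (p + q + 1)) in H by lia.
    apply jet_shift in H.
    eapply jet_coef; [| |apply H]; ring.
Qed.

Lemma sum_terms n (F : nat -> nat -> R) :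
  sum_f_R0 (fun i => F (i + 1)%nat (S n - i)%nat) n = sum_f_R0 (fun i => F (i+1)%nat (S n - i)%nat) n.
Proof. reflexivity. Qed.

Lemma S0_sum n : S0f (S (S n)) = sum_f_R0 (fun i => term0 (i + 1) (S n - i)) n.
Proof.
  unfold S0f, term0. rewrite !PS_mult_inner; try (apply (hA 0) || auto).
  rewrite <- !plus_sum. apply sum_eq. intros; ring.
Qed.

Lemma S1_sum n : S1f (S (S n)) = sum_f_R0 (fun i => term1 (i + 1) (S n - i)) n.
Proof.
  unfold S1f, term1. rewrite !PS_mult_inner; try (apply (hA 0) || apply (hB 0) || auto).
  rewrite <- !plus_sum. apply sum_eq. intros; ring.
Qed.

Theorem main_jets M : (1 <= M)%nat -> Pj M.
Proof.
  induction M as [M IH] using (well_founded_induction Wf_nat.lt_wf). intros HM.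
  destruct M as [|[|n]]. lia.
  - unfold Pj. simpl. rewrite hA1, hB1. pose proof (hC 0) as h1; pose proof (hD 0) as h2; simpl in h1, h2. rewrite h1, h2.
    apply (jet_ext _ (fun e => e)). intros; reflexivity.
    apply jet_exact. intros; simpl; ring.
  - unfold Pj.
    apply (jet_ext _ (fun e => (- (3 + e) * sum_f_R0 (fun i => RbarL (i + 1) e * RbarL (S n - i) e) n)
       / Dden (S (S n)) e)). intros; apply RbarL_rec.
    set (Kn := (Nat.div2 (S (S n) + 1) + 1)%nat).
    assert (Hs : jet (fun e => sum_f_R0 (fun i => RbarL (i + 1) e * RbarL (S n - i) e) n) Kn
                  (S0f (S (S n))) (S1f (S (S n)))).
    { rewrite S0_sum, S1_sum.
      apply (jet_sum (fun i e => RbarL (i + 1) e * RbarL (S n - i) e)).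
      intros i Hi. unfold Kn. replace (S (S n) + 1)%nat with (i + 1 + (S n - i) + 1)%nat by lia.
      apply term_jet; try lia; apply IH; lia. }
    assert (H3 : jet (fun e => - (3 + e)) 0 (-3) (-1)) by (apply jet_exact; intros; simpl; ring).
    pose proof (jet_mul _ _ _ _ _ _ _ _ H3 Hs) as HN. simpl plus in HN.
    pose proof (E0 (S (S n))) as e0. pose proof (E1 (S (S n))) as e1.
    destruct (Nat.Even_or_Odd n) as [[p Hp]|[p Hp]].
    +
      assert (Hk : (0 + (Nat.div2 (S (S n) + 1) + 1) = p + 1 + 1 + 0)%nat).
      { replace (S (S n) + 1)%nat with (S (2 * (p + 1))) by lia. rewrite Nat.div2_succ_double; lia. }
      unfold Kn in HN. rewrite Hk in HN.
      assert (HM2 : S (S n) = (2 * (p + 1))%nat) by lia.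
      rewrite HM2 in *. rewrite hA, hB in *.
      assert (HD := jet_Dden_even (p + 1)).
      rewrite Nat.div2_double.
      pose proof (jet_div _ _ _ _ _ _ _ _ HN HD ltac:(lra)) as HR.
      eapply jet_coef; [| |apply HR]; field_simplify; try lra; nra.
    +
      assert (Hk : (0 + (Nat.div2 (S (S n) + 1) + 1) = p + 1 + 1 + 1)%nat).
      { replace (S (S n) + 1)%nat with (2 * (p + 1 + 1))%nat by lia. rewrite Nat.div2_double; lia. }
      unfold Kn in HN. rewrite Hk in HN.
      assert (HM2 : S (S n) = S (2 * (p + 1))) by lia.
      rewrite HM2 in *. rewrite hC, hD in *.
      assert (HD := jet_Dden_odd (p + 1) ltac:(lia)).
      rewrite Nat.div2_succ_double.
      assert (Hne : 1 - INR (S (2 * (p + 1))) <> 0).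
      { rewrite S_INR. assert (0 < INR (2 * (p + 1))) by (apply lt_0_INR; lia). lra. }
      pose proof (jet_div _ _ _ _ _ _ _ _ HN HD Hne) as HR.
      eapply jet_coef; [| |apply HR].
      * set (m := INR (S (2 * (p + 1)))) in *. set (s0 := S0f (S (2 * (p + 1)))) in *.
        set (a := SA (S (2 * (p + 1)))) in *.
        assert (Hs0 : s0 = - ((1 - m) * a) / 3) by lra. rewrite Hs0. field. auto.
      * set (m := INR (S (2 * (p + 1)))) in *. set (s0 := S0f (S (2 * (p + 1)))) in *.
        set (s1 := S1f (S (2 * (p + 1)))) in *.
        set (a := SA (S (2 * (p + 1)))) in *. set (b := SB (S (2 * (p + 1)))) in *.
        assert (Hs0 : s0 = - ((1 - m) * a) / 3) by lra.
        assert (Hs1 : s1 = - ((1 - m) * b + s0 - m * (m - 1) / 2 * a) / 3) by lra.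
        rewrite Hs1, Hs0. field. auto.
Qed.
End Main.

Lemma sum_abs_ge (u : nat -> R) N n : (n <= N)%nat -> Rabs (u n) <= sum_f_R0 (fun k => Rabs (u k)) N.
Proof.
  induction N; intros H.
  - assert (n = 0%nat) by lia. subst. simpl. lra.
  - destruct (Nat.eq_dec n (S N)).
    + subst. simpl. assert (0 <= sum_f_R0 (fun k => Rabs (u k)) N).
      { apply cond_pos_sum. intros; apply Rabs_pos. } lra.
    + simpl. assert (0 <= Rabs (u (S N))) by apply Rabs_pos. assert (Rabs (u n) <= sum_f_R0 (fun k => Rabs (u k)) N) by (apply IHN; lia). lra.
Qed.

Lemma bounded_of_lim0 (u : nat -> R) : is_lim_seq u 0 -> exists M, forall n, Rabs (u n) <= M.
Proof.
  intros H. apply is_lim_seq_spec in H. destruct (H (mkposreal 1 Rlt_0_1)) as [N HN].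
  exists (1 + sum_f_R0 (fun k => Rabs (u k)) N). intros n.
  assert (0 <= sum_f_R0 (fun k => Rabs (u k)) N) by (apply cond_pos_sum; intros; apply Rabs_pos).
  destruct (Compare_dec.le_lt_dec n N).
  - assert (Rabs (u n) <= sum_f_R0 (fun k => Rabs (u k)) N) by (apply sum_abs_ge; auto). lra.
  - assert (Hn := HN n ltac:(lia)). simpl in Hn. rewrite Rminus_0_r in Hn. lra.
Qed.

Lemma rad_le_of_bounded (u : nat -> R) y : (exists M, forall n, Rabs (u n * y ^ n) <= M) ->
  Rbar_le y (CV_radius u).
Proof. intros H. destruct (CV_radius_bounded u) as [Hub _]. apply Hub. exact H. Qed.

Lemma rad_ex (u : nat -> R) r : (forall y, 0 <= y < r -> ex_pseries u y) ->
  forall x, Rabs x < r -> Rbar_lt (Rabs x) (CV_radius u).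
Proof.
  intros H x Hx. set (y := (Rabs x + r) / 2).
  assert (Hy : Rbar_le y (CV_radius u)).
  { apply rad_le_of_bounded. apply bounded_of_lim0.
    assert (0 <= Rabs x) by apply Rabs_pos.
    destruct (H y ltac:(unfold y; lra)) as [l Hl].
    apply ex_series_lim_0. exists l. apply (is_series_ext _ _ _ (fun n => eq_refl) ) in Hl.
    revert Hl. apply is_series_ext. intros n. unfold scal; simpl. unfold mult; simpl.
    rewrite pow_n_pow. ring. }
  destruct (CV_radius u) as [c| |]; simpl in *; auto. unfold y in Hy. lra.
Qed.

Lemma rad_bound (u : nat -> R) K rho : 0 < rho -> (forall n, Rabs (u n) <= K * rho ^ n) ->
  forall x, Rabs x < / rho -> Rbar_lt (Rabs x) (CV_radius u).
Proof.
  intros Hr H x Hx. set (y := (Rabs x + / rho) / 2).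
  assert (0 <= Rabs x) by apply Rabs_pos.
  assert (Hy : Rbar_le y (CV_radius u)).
  { apply rad_le_of_bounded. exists K. intros n.
    rewrite Rabs_mult, <- RPow_abs.
    assert (Hy0 : 0 <= y) by (unfold y; assert (0 < / rho) by (apply Rinv_0_lt_compat; auto); lra).
    rewrite (Rabs_right y) by lra.
    assert (Hry : rho * y <= 1).
    { unfold y. assert (rho * Rabs x < 1).
      { apply (Rmult_lt_compat_l rho) in Hx; auto. rewrite Rinv_r in Hx; lra. }
      assert (rho * / rho = 1) by (field; lra). nra. }
    apply Rle_trans with (K * rho ^ n * y ^ n).
    apply Rmult_le_compat_r. apply pow_le; auto. apply H.
    rewrite Rmult_assoc, <- Rpow_mult_distr.
    assert (0 <= K).
    { specialize (H 0%nat). simpl in H. assert (0 <= Rabs (u 0%nat)) by apply Rabs_pos. lra. }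
    assert ((rho * y) ^ n <= 1).
    { rewrite <- (pow1 n). apply pow_incr. split; auto. apply Rmult_le_pos; lra. }
    assert (0 <= (rho * y) ^ n) by (apply pow_le; apply Rmult_le_pos; lra).
    nra. }
  destruct (CV_radius u) as [c| |]; simpl in *; auto. unfold y in Hy.
  assert (Rabs x < / rho) by auto. lra.
Qed.

Lemma ps_unique_zero (u : nat -> R) r : 0 < r ->
  (forall x, Rabs x < r -> is_pseries u x 0) -> forall n, u n = 0.
Proof.
  intros Hr H n.
  assert (Hrad : Rbar_lt 0 (CV_radius u)).
  { assert (Rabs 0 < r) by (rewrite Rabs_R0; auto).
    pose proof (rad_ex u r (fun y Hy => ex_intro _ 0 (H y ltac:(rewrite Rabs_right; lra))) 0 H0).
    rewrite Rabs_R0 in H1. exact H1. }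
  apply (PSeries_ext_recip u (fun _ => 0) n Hrad).
  rewrite CV_radius_const_0. simpl; auto.
  exists (mkposreal r Hr). intros x Hx. rewrite PSeries_const_0.
  apply is_pseries_unique. apply H.
  unfold ball in Hx; simpl in Hx; unfold AbsRing_ball, abs, minus, plus, opp in Hx; simpl in Hx.
  replace x with (x + - 0) by ring. exact Hx.
Qed.

Fixpoint aco (n : nat) : R := match n with
  | O => 1 | S k => aco k * (9 * (-1/2 - INR k) / (INR k + 1)) end.
Definition qco (n : nat) : R := (-9) ^ n.
Definition Lco (n : nat) : R := match n with
  | O => 0 | S k => (-1) ^ k * 9 ^ (S k) / INR (S k) end.

Lemma aco_bound n : Rabs (aco n) <= 1 * 9 ^ n.
Proof.
  induction n. simpl. rewrite Rabs_R1. lra.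
  simpl aco. rewrite Rabs_mult. simpl pow.
  assert (HI : 0 <= INR n) by apply pos_INR.
  assert (Rabs (9 * (-1 / 2 - INR n) / (INR n + 1)) <= 9).
  { replace (9 * (-1/2 - INR n) / (INR n + 1)) with (-(9 * (INR n + 1/2) / (INR n + 1))) by (field; lra).
    rewrite Rabs_Ropp. rewrite Rabs_right.
    2:{ apply Rle_ge. apply Rmult_le_pos; [|left; apply Rinv_0_lt_compat]; lra. }
    apply (Rmult_le_reg_r (INR n + 1)). lra.
    unfold Rdiv. rewrite Rmult_assoc, Rinv_l by lra. lra. }
  assert (0 <= Rabs (aco n)) by apply Rabs_pos.
  assert (0 <= 9 ^ n) by (apply pow_le; lra). nra.
Qed.

Lemma qco_bound n : Rabs (qco n) <= 1 * 9 ^ n.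
Proof. unfold qco. rewrite <- RPow_abs. rewrite Rabs_left by lra. replace (- -9) with 9 by ring. lra. Qed.

Lemma Lco_bound n : Rabs (Lco n) <= 1 * 9 ^ n.
Proof.
  destruct n. simpl. rewrite Rabs_R0. lra.
  unfold Lco. unfold Rdiv. rewrite !Rabs_mult, Rabs_inv, <- !RPow_abs.
  rewrite Rabs_left by lra. replace (- -1) with 1 by ring. rewrite pow1.
  rewrite (Rabs_right 9) by lra. rewrite (Rabs_right (INR (S n))).
  2:{ apply Rle_ge, pos_INR. }
  assert (1 <= INR (S n)) by (rewrite S_INR; assert (0 <= INR n) by apply pos_INR; lra).
  assert (0 < 9 ^ S n) by (apply pow_lt; lra).
  assert (/ INR (S n) <= 1).
  { rewrite <- Rinv_1. apply Rinv_le_contravar; lra. }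
  assert (0 < / INR (S n)) by (apply Rinv_0_lt_compat; lra). nra.
Qed.

Lemma rad9 u : (forall n, Rabs (u n) <= 1 * 9 ^ n) -> forall x, Rabs x < 1/9 -> Rbar_lt (Rabs x) (CV_radius u).
Proof. intros H x Hx. apply (rad_bound u 1 9); auto. lra. replace (/9) with (1/9) by field. auto. Qed.

Lemma is_pseries_R (u : nat -> R) x l : is_pseries u x l <-> is_series (fun n => u n * x ^ n) l.
Proof.
  unfold is_pseries. split; intro H; revert H; apply is_series_ext; intros n; unfold scal; simpl; unfold mult; simpl;
  replace (pow_n x n) with (x ^ n) by (symmetry; apply pow_n_pow); ring.
Qed.

Lemma ps_scal c (u : nat -> R) x l : is_pseries u x l -> is_pseries (fun n => c * u n) x (c * l).
Proof. intros H. apply (is_pseries_scal c) in H. exact H. apply Rmult_comm. Qed.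

Lemma ps_plus (u v : nat -> R) x l1 l2 : is_pseries u x l1 -> is_pseries v x l2 ->
  is_pseries (fun n => u n + v n) x (l1 + l2).
Proof. intros H1 H2. exact (is_pseries_plus _ _ _ _ _ H1 H2). Qed.

Lemma ps_incr (u : nat -> R) x l : is_pseries u x l -> is_pseries (PS_incr_1 u) x (x * l).
Proof. intros H. exact (is_pseries_incr_1 _ _ _ H). Qed.

Lemma ps_uniq (u : nat -> R) x l1 l2 : is_pseries u x l1 -> is_pseries u x l2 -> l1 = l2.
Proof. intros H1 H2. apply is_pseries_unique in H1. apply is_pseries_unique in H2. congruence. Qed.

Lemma ps_ext (u v : nat -> R) x l : (forall n, u n = v n) -> is_pseries u x l -> is_pseries v x l.
Proof. apply is_pseries_ext. Qed.

Lemma ode_const (g dg : R -> R) x : (forall y, Rabs y <= Rabs x -> is_derive g y (dg y)) ->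
  (forall y, Rabs y <= Rabs x -> dg y = 0) -> g x = g 0.
Proof.
  intros H1 H2. pose proof (MVT_cor4 g dg 0 (Rabs x)) as M.
  destruct (M (fun c Hc => H1 c ltac:(rewrite Rminus_0_r in Hc; auto)) x ltac:(rewrite Rminus_0_r; lra))
    as [c [Hc1 Hc2]].
  rewrite !Rminus_0_r in Hc2. rewrite H2 in Hc1 by lra. lra.
Qed.

Lemma qco_series x : Rabs x < 1/9 -> is_pseries qco x (/ (1 + 9 * x)).
Proof.
  intros Hx. apply is_pseries_R.
  replace (1 + 9 * x) with (1 - (-9 * x)) by ring.
  eapply is_series_ext; [|apply is_series_geom].
  intros n. simpl. unfold qco. rewrite <- Rpow_mult_distr. reflexivity.
  rewrite Rabs_mult. rewrite Rabs_left by lra. lra.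
Qed.

Lemma sqrt_pos_lem x : Rabs x < 1/9 -> 0 < 1 + 9 * x.
Proof. intros H. apply Rabs_def2 in H. lra. Qed.

Lemma aco_rec n : PS_derive aco n + 9 * PS_incr_1 (PS_derive aco) n = -(9/2) * aco n.
Proof.
  unfold PS_derive. destruct n.
  - simpl. unfold zero; simpl. field.
  - unfold PS_incr_1.
    change (aco (S (S n))) with (aco (S n) * (9 * (-1/2 - INR (S n)) / (INR (S n) + 1))).
    set (k := INR (S n)). set (an := aco (S n)).
    replace (INR (S (S n))) with (k + 1) by (unfold k; rewrite (S_INR (S n)); ring).
    assert (0 <= k) by apply pos_INR. field. lra.
Qed.

Lemma aco_series x : Rabs x < 1/9 -> is_pseries aco x (/ sqrt (1 + 9 * x)).
Proof.
  intros Hx.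
  assert (Hr := rad9 aco aco_bound).
  set (f := PSeries aco).
  assert (Hf : forall y, Rabs y < 1/9 -> (1 + 9 * y) * Derive f y = -(9/2) * f y).
  { intros y Hy.
    assert (H1 := is_pseries_derive aco y (Hr y Hy)).
    assert (H2 := ps_incr _ _ _ H1).
    assert (H3 := ps_scal 9 _ _ _ H2).
    assert (H4 := ps_plus _ _ _ _ _ H1 H3).
    assert (H5 := PSeries_correct aco y (CV_radius_inside _ _ (Hr y Hy))).
    assert (H6 := ps_scal (-(9/2)) _ _ _ H5).
    apply (ps_ext _ (fun n => -(9/2) * aco n)) in H4.
    2:{ intros n. rewrite <- aco_rec. reflexivity. }
    pose proof (ps_uniq _ _ _ _ H4 H6) as HH. unfold f. rewrite <- HH. ring. }
  assert (Hg : f x * sqrt (1 + 9 * x) = f 0 * sqrt (1 + 9 * 0)).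
  { apply (ode_const (fun y => f y * sqrt (1 + 9 * y))
          (fun y => Derive f y * sqrt (1 + 9 * y) + f y * (9 / (2 * sqrt (1 + 9 * y))))).
    - intros y Hy. assert (Hy' : Rabs y < 1/9) by lra.
      assert (Hp := sqrt_pos_lem y Hy').
      apply (is_derive_mult f (fun y => sqrt (1 + 9 * y))).
      + apply Derive_correct. apply ex_derive_PSeries. apply Hr; auto.
      + assert (He : is_derive (fun y => 1 + 9 * y) y 9).
        { auto_derive; auto. ring. }
        pose proof (is_derive_sqrt _ _ _ He Hp) as Hs. simpl in Hs. exact Hs.
      + intros; apply Rmult_comm.
    - intros y Hy. assert (Hy' : Rabs y < 1/9) by lra.
      assert (Hp := sqrt_pos_lem y Hy').
      assert (Hs := sqrt_lt_R0 _ Hp). assert (Hss := sqrt_sqrt _ (Rlt_le _ _ Hp)).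
      apply (Rmult_eq_reg_r (sqrt (1 + 9 * y))); [|lra].
      replace ((Derive f y * sqrt (1 + 9 * y) + f y * (9 / (2 * sqrt (1 + 9 * y)))) * sqrt (1 + 9 * y))
        with ((1 + 9 * y) * Derive f y + (9/2) * f y).
      rewrite Hf; auto; ring.
      field_simplify; [|lra]. rewrite <- Rsqr_pow2, Rsqr_sqrt by lra. field. }
  replace (1 + 9 * 0) with 1 in Hg by ring. rewrite sqrt_1, Rmult_1_r in Hg.
  unfold f in Hg. rewrite PSeries_0 in Hg. simpl aco in Hg.
  assert (Hp := sqrt_pos_lem x Hx). assert (Hs := sqrt_lt_R0 _ Hp).
  replace (/ sqrt (1 + 9 * x)) with (PSeries aco x).
  apply PSeries_correct, CV_radius_inside, Hr; auto.
  apply (Rmult_eq_reg_r (sqrt (1 + 9 * x))); [|lra]. rewrite Hg. field. lra.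
Qed.

Lemma Lco_deriv n : PS_derive Lco n = 9 * qco n.
Proof.
  unfold PS_derive, qco. change (Lco (S n)) with ((-1)^n * 9^(S n) / INR (S n)).
  replace (-9) with (-1 * 9) by ring. rewrite Rpow_mult_distr. simpl pow.
  field. rewrite S_INR. assert (0 <= INR n) by apply pos_INR. lra.
Qed.

Lemma Lco_series x : Rabs x < 1/9 -> is_pseries Lco x (ln (1 + 9 * x)).
Proof.
  intros Hx.
  assert (Hr := rad9 Lco Lco_bound).
  set (f := PSeries Lco).
  assert (Hf : forall y, Rabs y < 1/9 -> Derive f y = 9 / (1 + 9 * y)).
  { intros y Hy. unfold f. rewrite Derive_PSeries by (apply Hr; auto).
    apply is_pseries_unique. apply (ps_ext (fun n => 9 * qco n)).
    intros n; rewrite Lco_deriv; reflexivity.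
    replace (9 / (1 + 9 * y)) with (9 * (/ (1 + 9 * y))) by (unfold Rdiv; ring).
    apply ps_scal. apply qco_series; auto. }
  assert (Hg : f x - ln (1 + 9 * x) = f 0 - ln (1 + 9 * 0)).
  { apply (ode_const (fun y => f y - ln (1 + 9 * y)) (fun y => Derive f y - 9 / (1 + 9 * y))).
    - intros y Hy. assert (Hy' : Rabs y < 1/9) by lra.
      assert (Hp := sqrt_pos_lem y Hy').
      apply (is_derive_plus f (fun y => - ln (1 + 9 * y))).
      + apply Derive_correct. apply ex_derive_PSeries. apply Hr; auto.
      + auto_derive. lra. field. lra.
    - intros y Hy. rewrite Hf by lra. ring. }
  unfold f in Hg. rewrite PSeries_0 in Hg. simpl Lco in Hg.
  replace (1 + 9 * 0) with 1 in Hg by ring. rewrite ln_1 in Hg.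
  replace (ln (1 + 9 * x)) with (PSeries Lco x) by lra.
  apply PSeries_correct, CV_radius_inside, Hr; auto.
Qed.

Lemma ps_zero x : is_pseries (fun _ => 0) x 0.
Proof.
  assert (H : is_pseries (fun _ : nat => 0) x (PSeries (fun _ : nat => 0) x)).
  { apply PSeries_correct, CV_radius_inside. rewrite CV_radius_const_0. simpl; auto. }
  rewrite PSeries_const_0 in H. exact H.
Qed.

Lemma ps_mult (u v : nat -> R) x l1 l2 r :
  (forall y, Rabs y < r -> Rbar_lt (Rabs y) (CV_radius u)) ->
  (forall y, Rabs y < r -> Rbar_lt (Rabs y) (CV_radius v)) ->
  (forall y, Rabs y < r -> is_pseries u y (l1 y)) ->
  (forall y, Rabs y < r -> is_pseries v y (l2 y)) ->
  Rabs x < r ->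
  is_pseries (PS_mult u v) x (l1 x * l2 x) /\ (forall y, Rabs y < r -> Rbar_lt (Rabs y) (CV_radius (PS_mult u v))).
Proof.
  intros Ru Rv Hu Hv Hx.
  assert (H : forall y, Rabs y < r -> is_pseries (PS_mult u v) y (l1 y * l2 y)).
  { intros y Hy. apply is_pseries_mult; auto. }
  split. apply H; auto.
  apply rad_ex. intros y Hy. exists (l1 y * l2 y). apply H. rewrite Rabs_right; lra.
Qed.

Definition a9 x := / sqrt (1 + 9 * x).
Definition w9 x := / (1 + 9 * x).
Definition l9 x := ln (1 + 9 * x).

Definition P3co := PS_mult aco qco.
Definition Q2co := PS_mult qco qco.
Definition cco := PS_incr_1 (fun n => -(3/2) * qco n).
Definition bco n := -(45/24) * PS_incr_1 P3co n + (33/24) * PS_mult Lco P3co n.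
Definition dco n := (1/8) * PS_incr_1 (fun k => 14 * Q2co k + 36 * PS_incr_1 Q2co k + (-33) * PS_mult Lco Q2co k) n.

Definition r9 := 1/9.

Lemma aco_s y : Rabs y < r9 -> is_pseries aco y (a9 y). Proof. apply aco_series. Qed.
Lemma qco_s y : Rabs y < r9 -> is_pseries qco y (w9 y). Proof. apply qco_series. Qed.
Lemma Lco_s y : Rabs y < r9 -> is_pseries Lco y (l9 y). Proof. apply Lco_series. Qed.
Lemma aco_r y : Rabs y < r9 -> Rbar_lt (Rabs y) (CV_radius aco). Proof. apply rad9, aco_bound. Qed.
Lemma qco_r y : Rabs y < r9 -> Rbar_lt (Rabs y) (CV_radius qco). Proof. apply rad9, qco_bound. Qed.
Lemma Lco_r y : Rabs y < r9 -> Rbar_lt (Rabs y) (CV_radius Lco). Proof. apply rad9, Lco_bound. Qed.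

Lemma P3_s y : Rabs y < r9 -> is_pseries P3co y (a9 y * w9 y).
Proof. intros H. apply (ps_mult aco qco y a9 w9 r9 aco_r qco_r aco_s qco_s H). Qed.
Lemma P3_r y : Rabs y < r9 -> Rbar_lt (Rabs y) (CV_radius P3co).
Proof. intros H. apply (ps_mult aco qco y a9 w9 r9 aco_r qco_r aco_s qco_s H). auto. Qed.
Lemma Q2_s y : Rabs y < r9 -> is_pseries Q2co y (w9 y * w9 y).
Proof. intros H. apply (ps_mult qco qco y w9 w9 r9 qco_r qco_r qco_s qco_s H). Qed.
Lemma Q2_r y : Rabs y < r9 -> Rbar_lt (Rabs y) (CV_radius Q2co).
Proof. intros H. apply (ps_mult qco qco y w9 w9 r9 qco_r qco_r qco_s qco_s H). auto. Qed.

Definition cval x := x * (-(3/2) * w9 x).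
Definition bval x := -(45/24) * (x * (a9 x * w9 x)) + (33/24) * (l9 x * (a9 x * w9 x)).
Definition dval x := (1/8) * (x * (14 * (w9 x * w9 x) + 36 * (x * (w9 x * w9 x)) + (-33) * (l9 x * (w9 x * w9 x)))).

Lemma cco_s y : Rabs y < r9 -> is_pseries cco y (cval y).
Proof. intros H. apply ps_incr, ps_scal, qco_s; auto. Qed.

Lemma bco_s y : Rabs y < r9 -> is_pseries bco y (bval y).
Proof.
  intros H. apply ps_plus; apply ps_scal.
  apply ps_incr, P3_s; auto.
  apply (ps_mult Lco P3co y l9 (fun y => a9 y * w9 y) r9 Lco_r P3_r Lco_s P3_s H).
Qed.

Lemma dco_s y : Rabs y < r9 -> is_pseries dco y (dval y).
Proof.
  intros H. apply ps_scal, ps_incr. apply ps_plus. apply ps_plus.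
  apply ps_scal, Q2_s; auto. apply ps_scal, ps_incr, Q2_s; auto.
  apply ps_scal. apply (ps_mult Lco Q2co y l9 (fun y => w9 y * w9 y) r9 Lco_r Q2_r Lco_s Q2_s H).
Qed.

Lemma cco_0 : cco 0%nat = 0. Proof. reflexivity. Qed.
Lemma dco_0 : dco 0%nat = 0. Proof. unfold dco. simpl. unfold zero; simpl. ring. Qed.
Lemma aco_0 : aco 0%nat = 1. Proof. reflexivity. Qed.
Lemma bco_0 : bco 0%nat = 0.
Proof. unfold bco, PS_mult. simpl. unfold zero; simpl. ring. Qed.

Definition oddify (u : nat -> R) j := if Nat.even j then 0 else u (Nat.div2 j).
Definition evenify (u : nat -> R) j := if Nat.even j then u (Nat.div2 j) else 0.

Lemma oddify_even u p : oddify u (2 * p) = 0.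
Proof. unfold oddify. rewrite Nat.even_even. reflexivity. Qed.
Lemma oddify_odd u p : oddify u (S (2 * p)) = u p.
Proof. unfold oddify. rewrite Nat.even_succ, Nat.odd_even, Nat.div2_succ_double. reflexivity. Qed.
Lemma evenify_even u p : evenify u (2 * p) = u p.
Proof. unfold evenify. rewrite Nat.even_even, Nat.div2_double. reflexivity. Qed.
Lemma evenify_odd u p : evenify u (S (2 * p)) = 0.
Proof. unfold evenify. rewrite Nat.even_succ, Nat.odd_even. reflexivity. Qed.

Definition r3 := 1/3.

Lemma sq_small t : Rabs t < r3 -> Rabs (t ^ 2) < r9.
Proof.
  unfold r3, r9. intros H. rewrite <- RPow_abs. simpl.
  assert (0 <= Rabs t) by apply Rabs_pos. nra.
Qed.

Lemma ps_oddify (u : nat -> R) f t : (forall y, Rabs y < r9 -> is_pseries u y (f y)) ->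
  Rabs t < r3 -> is_pseries (oddify u) t (t * f (t ^ 2)).
Proof.
  intros H Ht. replace (t * f (t ^ 2)) with (0 + t * f (t ^ 2)) by ring.
  apply is_pseries_odd_even.
  - apply (ps_ext (fun _ => 0)). intros n. rewrite oddify_even. reflexivity. apply ps_zero.
  - apply (ps_ext u). intros n. replace (2 * n + 1)%nat with (S (2 * n)) by lia.
    rewrite oddify_odd. reflexivity. apply H, sq_small, Ht.
Qed.

Lemma ps_evenify (u : nat -> R) f t : (forall y, Rabs y < r9 -> is_pseries u y (f y)) ->
  Rabs t < r3 -> is_pseries (evenify u) t (f (t ^ 2)).
Proof.
  intros H Ht. replace (f (t ^ 2)) with (f (t ^ 2) + t * 0) by ring.
  apply is_pseries_odd_even.
  - apply (ps_ext u). intros n. rewrite evenify_even. reflexivity. apply H, sq_small, Ht.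
  - apply (ps_ext (fun _ => 0)). intros n. replace (2 * n + 1)%nat with (S (2 * n)) by lia.
    rewrite evenify_odd. reflexivity. apply ps_zero.
Qed.

Definition SA := oddify aco.
Definition SB := oddify bco.
Definition SC := evenify cco.
Definition SD := evenify dco.

Definition G t := / sqrt (1 + 9 * t ^ 2).
Definition W t := / (1 + 9 * t ^ 2).
Definition Lg t := ln (1 + 9 * t ^ 2).
Definition Af t := t * G t.
Definition Bf t := t * G t * W t * (-(45/24) * t ^ 2 + (33/24) * Lg t).
Definition Cf t := -(3/2) * t ^ 2 * W t.
Definition Df t := (1/8) * t ^ 2 * (W t * W t) * (14 + 36 * t ^ 2 - 33 * Lg t).

Lemma pos9 t : 0 < 1 + 9 * t ^ 2.
Proof. assert (0 <= t ^ 2) by (simpl; nra). lra. Qed.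

Lemma SA_s t : Rabs t < r3 -> is_pseries SA t (Af t).
Proof. intros Ht. apply (ps_oddify aco a9 t aco_s Ht). Qed.
Lemma SB_s t : Rabs t < r3 -> is_pseries SB t (Bf t).
Proof.
  intros Ht. eapply ps_ext; [intros n; reflexivity|].
  replace (Bf t) with (t * bval (t ^ 2)).
  apply (ps_oddify bco bval t bco_s Ht).
  unfold Bf, bval, a9, w9, l9, G, W, Lg. ring.
Qed.
Lemma SC_s t : Rabs t < r3 -> is_pseries SC t (Cf t).
Proof.
  intros Ht. replace (Cf t) with (cval (t ^ 2)).
  apply (ps_evenify cco cval t cco_s Ht).
  unfold Cf, cval, w9, W. ring.
Qed.
Lemma SD_s t : Rabs t < r3 -> is_pseries SD t (Df t).
Proof.
  intros Ht. replace (Df t) with (dval (t ^ 2)).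
  apply (ps_evenify dco dval t dco_s Ht).
  unfold Df, dval, w9, W, l9, Lg. ring.
Qed.

Lemma rad3 u f : (forall t, Rabs t < r3 -> is_pseries u t (f t)) ->
  forall t, Rabs t < r3 -> Rbar_lt (Rabs t) (CV_radius u).
Proof. intros H. apply rad_ex. intros y Hy. exists (f y). apply H. rewrite Rabs_right; lra. Qed.

Lemma SA_r t : Rabs t < r3 -> Rbar_lt (Rabs t) (CV_radius SA). Proof. apply (rad3 SA Af SA_s). Qed.
Lemma SB_r t : Rabs t < r3 -> Rbar_lt (Rabs t) (CV_radius SB). Proof. apply (rad3 SB Bf SB_s). Qed.
Lemma SC_r t : Rabs t < r3 -> Rbar_lt (Rabs t) (CV_radius SC). Proof. apply (rad3 SC Cf SC_s). Qed.
Lemma SD_r t : Rabs t < r3 -> Rbar_lt (Rabs t) (CV_radius SD). Proof. apply (rad3 SD Df SD_s). Qed.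

Lemma dmul (f g : R -> R) (t df dg : R) : is_derive f t df -> is_derive g t dg ->
  is_derive (fun s => f s * g s) t (df * g t + f t * dg).
Proof. intros H1 H2. apply (is_derive_mult f g t df dg H1 H2). intros; apply Rmult_comm. Qed.
Lemma dadd (f g : R -> R) (t df dg : R) : is_derive f t df -> is_derive g t dg ->
  is_derive (fun s => f s + g s) t (df + dg).
Proof. intros H1 H2. apply (is_derive_plus f g t df dg H1 H2). Qed.
Lemma dext (f g : R -> R) (t df df' : R) : (forall s, f s = g s) -> df = df' -> is_derive g t df -> is_derive f t df'.
Proof. intros H -> H2. apply (is_derive_ext g f). intros; auto. auto. Qed.
Lemma did (t : R) : is_derive (fun s => s) t 1.
Proof. apply (is_derive_id t). Qed.
Lemma dconst (c t : R) : is_derive (fun _ => c) t 0.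
Proof. apply (is_derive_const c t). Qed.

Lemma dG t : is_derive G t (-9 * t * G t * W t).
Proof.
  unfold G, W. assert (Hp := pos9 t). assert (Hs := sqrt_lt_R0 _ Hp).
  assert (Hss := sqrt_sqrt _ (Rlt_le _ _ Hp)).
  auto_derive; replace (t * (t * 1)) with (t ^ 2) by ring.
  split; [lra| split; [lra|auto]].
  rewrite Hss. field. split; lra.
Qed.
Lemma dW t : is_derive W t (-18 * t * W t * W t).
Proof.
  unfold W. assert (Hp := pos9 t). auto_derive; replace (t * (t * 1)) with (t ^ 2) by ring. lra.
  field. lra.
Qed.
Lemma dL t : is_derive Lg t (18 * t * W t).
Proof.
  unfold Lg, W. assert (Hp := pos9 t). auto_derive; replace (t * (t * 1)) with (t ^ 2) by ring. lra.
  field. lra.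
Qed.

Lemma GG t : G t * G t = W t.
Proof.
  unfold G, W. assert (Hp := pos9 t). assert (Hs := sqrt_lt_R0 _ Hp).
  assert (Hss := sqrt_sqrt _ (Rlt_le _ _ Hp)). rewrite <- Rinv_mult. rewrite Hss. reflexivity.
Qed.

Definition dAf t := G t * W t.
Definition d2Af t := -27 * t * G t * (W t * W t).
Definition dCf t := -3 * t * (W t * W t).
Definition dBf t := G t * W t * (W t * (-(45/24) * t ^ 2 + (33/24) * Lg t))
  + t * G t * (-18 * t * W t * W t * (-(45/24) * t ^ 2 + (33/24) * Lg t)
               + W t * (-(90/24) * t + (33/24) * (18 * t * W t))).

Lemma W_eq t : W t * (1 + 9 * t ^ 2) = 1.
Proof. unfold W. assert (Hp := pos9 t). field. lra. Qed.

Lemma dAf_ok t : is_derive Af t (dAf t).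
Proof.
  unfold Af. eapply dext; [intros; reflexivity| |apply dmul; [apply did|apply dG]].
  unfold dAf, W. assert (Hp := pos9 t). simpl in *. field. lra.
Qed.

Lemma d2Af_ok t : is_derive dAf t (d2Af t).
Proof.
  unfold dAf. eapply dext; [intros; reflexivity| |apply dmul; [apply dG|apply dW]].
  unfold d2Af. ring.
Qed.

Lemma dCf_ok t : is_derive Cf t (dCf t).
Proof.
  unfold Cf. eapply dext; [intros; reflexivity| |apply dmul; [|apply dW]].
  2:{ apply (is_derive_scal (fun s => s ^ 2) t (-(3/2))). auto_derive; auto. }
  unfold dCf, W. assert (Hp := pos9 t). simpl in *. field. lra.
Qed.

Lemma dBf_ok t : is_derive Bf t (dBf t).
Proof.
  unfold Bf.
  eapply dext; [intros; reflexivity| |].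
  2:{ apply dmul. apply dmul. apply dAf_ok. apply dW.
      apply dadd. apply (is_derive_scal (fun s => s ^ 2) t (-(45/24))). auto_derive; auto.
      apply (is_derive_scal Lg t (33/24)). apply dL. }
  unfold dBf, Af, dAf. field.
Qed.

Ltac req := match goal with |- @eq _ ?a ?b => change (@eq R a b) end.

Lemma loc_disc t : Rabs t < r3 -> locally t (fun s => Rabs s < r3).
Proof.
  intros Ht. assert (Hp : 0 < r3 - Rabs t) by lra.
  exists (mkposreal _ Hp). intros s Hs.
  unfold ball in Hs; simpl in Hs; unfold AbsRing_ball, abs, minus, plus, opp in Hs; simpl in Hs.
  assert (Rabs s <= Rabs t + Rabs (s + - t)).
  { replace s with (t + (s + - t)) at 1 by ring. apply Rabs_triang. }
  lra.
Qed.

Lemma ps_der (u : nat -> R) (f df : R -> R) :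
  (forall s, Rabs s < r3 -> is_pseries u s (f s)) ->
  (forall s, Rabs s < r3 -> Rbar_lt (Rabs s) (CV_radius u)) ->
  (forall s, is_derive f s (df s)) ->
  forall t, Rabs t < r3 -> is_pseries (PS_derive u) t (df t).
Proof.
  intros Hu Ru Hd t Ht.
  assert (H := is_pseries_derive u t (Ru t Ht)).
  replace (df t) with (Derive (PSeries u) t). exact H.
  rewrite (Derive_ext_loc _ f). apply is_derive_unique, Hd.
  generalize (loc_disc t Ht). apply filter_imp. intros s Hs.
  apply is_pseries_unique, Hu, Hs.
Qed.

Lemma rad_der (u : nat -> R) : (forall s, Rabs s < r3 -> Rbar_lt (Rabs s) (CV_radius u)) ->
  (forall s, Rabs s < r3 -> Rbar_lt (Rabs s) (CV_radius (PS_derive u))).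
Proof. intros H s Hs. rewrite CV_radius_derive. auto. Qed.

Lemma incr_der (u : nat -> R) M : PS_incr_1 (PS_derive u) M = INR M * u M.
Proof. destruct M. simpl. unfold zero; simpl. ring. simpl. unfold PS_derive. reflexivity. Qed.

Lemma incr2_der (u : nat -> R) M :
  PS_incr_1 (PS_incr_1 (PS_derive (PS_derive u))) M = INR M * (INR M - 1) * u M.
Proof.
  destruct M as [|[|k]]. simpl. unfold zero; simpl. ring. simpl. unfold zero; simpl. ring.
  unfold PS_incr_1, PS_derive. req. rewrite (S_INR (S k)). ring.
Qed.

Lemma AA t : Af t * Af t = t ^ 2 * W t.
Proof. unfold Af. rewrite <- GG. ring. Qed.
Lemma AB t : Af t * Bf t = t ^ 2 * W t * W t * (-(45/24) * t ^ 2 + (33/24) * Lg t).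
Proof. unfold Af, Bf. rewrite <- GG. ring. Qed.
Lemma BA t : Bf t * Af t = t ^ 2 * W t * W t * (-(45/24) * t ^ 2 + (33/24) * Lg t).
Proof. unfold Af, Bf. rewrite <- GG. ring. Qed.

Definition E0seq M := (1 - INR M) * SA M + 2 * SC M + 3 * S0f SA SC M.
Definition E1seq M := (1 - INR M) * SB M + 2 * SD M + S0f SA SC M + 3 * S1f SA SB SC SD M
   - INR M * (INR M - 1) / 2 * SA M + (INR M + 1) * SC M.

Lemma pm u v f g t : (forall s, Rabs s < r3 -> Rbar_lt (Rabs s) (CV_radius u)) ->
  (forall s, Rabs s < r3 -> Rbar_lt (Rabs s) (CV_radius v)) ->
  (forall s, Rabs s < r3 -> is_pseries u s (f s)) ->
  (forall s, Rabs s < r3 -> is_pseries v s (g s)) -> Rabs t < r3 ->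
  is_pseries (PS_mult u v) t (f t * g t).
Proof. intros. apply (ps_mult u v t f g r3); auto. Qed.

Lemma E0_ser t : Rabs t < r3 -> is_pseries E0seq t 0.
Proof.
  intros Ht.
  assert (hA := SA_s t Ht). assert (hC := SC_s t Ht).
  assert (hdA := ps_der SA Af dAf SA_s SA_r dAf_ok t Ht).
  assert (hAA := pm _ _ _ _ t SA_r SA_r SA_s SA_s Ht).
  assert (hAC := pm _ _ _ _ t SA_r SC_r SA_s SC_s Ht).
  assert (hCA := pm _ _ _ _ t SC_r SA_r SC_s SA_s Ht).
  pose proof (ps_plus _ _ _ _ _ (ps_plus _ _ _ _ _ (ps_plus _ _ _ _ _ hA (ps_scal (-1) _ _ _ (ps_incr _ _ _ hdA)))
     (ps_scal 2 _ _ _ hC)) (ps_scal 3 _ _ _ (ps_plus _ _ _ _ _ (ps_plus _ _ _ _ _ hAA hAC) hCA))) as H.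
  eapply ps_ext; [|replace 0 with (Af t + -1 * (t * dAf t) + 2 * Cf t + 3 * (Af t * Af t + Af t * Cf t + Cf t * Af t)); [exact H|]].
  - intros M. unfold E0seq, S0f. rewrite incr_der. ring.
  - rewrite AA. unfold Af, Cf, dAf, W. assert (Hp := pos9 t). field. lra.
Qed.

Lemma E1_ser t : Rabs t < r3 -> is_pseries E1seq t 0.
Proof.
  intros Ht.
  assert (hA := SA_s t Ht). assert (hB := SB_s t Ht). assert (hC := SC_s t Ht). assert (hD := SD_s t Ht).
  assert (hdA := ps_der SA Af dAf SA_s SA_r dAf_ok).
  assert (hd2A := ps_der (PS_derive SA) dAf d2Af hdA (rad_der _ SA_r) d2Af_ok t Ht).
  assert (hdB := ps_der SB Bf dBf SB_s SB_r dBf_ok t Ht).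
  assert (hdC := ps_der SC Cf dCf SC_s SC_r dCf_ok t Ht).
  assert (hAA := pm _ _ _ _ t SA_r SA_r SA_s SA_s Ht).
  assert (hAC := pm _ _ _ _ t SA_r SC_r SA_s SC_s Ht).
  assert (hCA := pm _ _ _ _ t SC_r SA_r SC_s SA_s Ht).
  assert (hAB := pm _ _ _ _ t SA_r SB_r SA_s SB_s Ht).
  assert (hBA := pm _ _ _ _ t SB_r SA_r SB_s SA_s Ht).
  assert (hAD := pm _ _ _ _ t SA_r SD_r SA_s SD_s Ht).
  assert (hDA := pm _ _ _ _ t SD_r SA_r SD_s SA_s Ht).
  assert (hBC := pm _ _ _ _ t SB_r SC_r SB_s SC_s Ht).
  assert (hCB := pm _ _ _ _ t SC_r SB_r SC_s SB_s Ht).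
  assert (hCC := pm _ _ _ _ t SC_r SC_r SC_s SC_s Ht).
  assert (h0 := ps_plus _ _ _ _ _ (ps_plus _ _ _ _ _ hAA hAC) hCA).
  assert (h1 := ps_plus _ _ _ _ _ (ps_plus _ _ _ _ _ (ps_plus _ _ _ _ _ (ps_plus _ _ _ _ _
                 (ps_plus _ _ _ _ _ (ps_plus _ _ _ _ _ hAB hBA) hAD) hDA) hBC) hCB) hCC).
  pose proof (ps_plus _ _ _ _ _ (ps_plus _ _ _ _ _ (ps_plus _ _ _ _ _ (ps_plus _ _ _ _ _ (ps_plus _ _ _ _ _
     (ps_plus _ _ _ _ _ (ps_plus _ _ _ _ _ hB (ps_scal (-1) _ _ _ (ps_incr _ _ _ hdB)))
        (ps_scal 2 _ _ _ hD)) h0) (ps_scal 3 _ _ _ h1))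
     (ps_scal (-(1/2)) _ _ _ (ps_incr _ _ _ (ps_incr _ _ _ hd2A)))) hC) (ps_incr _ _ _ hdC)) as H.
  match type of H with is_pseries _ _ ?v => replace 0 with v end.
  - eapply ps_ext; [|exact H]. intros M. unfold E1seq, S0f, S1f. rewrite !incr_der, incr2_der. req. field.
  - rewrite AA, AB, BA. unfold Af, Bf, Cf, Df, dAf, d2Af, dBf, dCf, W. assert (Hp := pos9 t). field. lra.
Qed.

Lemma E0_zero M : (1 - INR M) * SA M + 2 * SC M + 3 * S0f SA SC M = 0.
Proof. apply (ps_unique_zero E0seq r3). unfold r3; lra. apply E0_ser. Qed.

Lemma E1_zero M : (1 - INR M) * SB M + 2 * SD M + S0f SA SC M + 3 * S1f SA SB SC SD M
   - INR M * (INR M - 1) / 2 * SA M + (INR M + 1) * SC M = 0.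
Proof. apply (ps_unique_zero E1seq r3). unfold r3; lra. apply E1_ser. Qed.


Lemma all_jets M : (1 <= M)%nat -> Pj SA SB SC SD M.
Proof.
  apply main_jets.
  - intros p; apply oddify_even.
  - intros p; apply oddify_even.
  - intros p; apply evenify_odd.
  - intros p; apply evenify_odd.
  - exact (evenify_even cco 0).
  - pose proof (evenify_even dco 0) as h. simpl in h. unfold SD. rewrite h. apply dco_0.
  - exact (oddify_odd aco 0).
  - pose proof (oddify_odd bco 0) as h. simpl in h. unfold SB. rewrite h. apply bco_0.
  - apply E0_zero.
  - apply E1_zero.
Qed.

Lemma ser_b tau : Rabs tau < 1 / 3 ->
  is_series (fun m : nat => bco m * tau ^ (2 * m + 1))
    (- (tau * (45 * tau ^ 2 - 33 * ln (1 + 9 * tau ^ 2))) / (24 * Rpower (1 + 9 * tau ^ 2) (3 / 2))).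
Proof.
  intros Ht. assert (Hx := sq_small tau Ht).
  assert (H := bco_s _ Hx). apply is_pseries_R in H.
  apply (is_series_scal tau) in H.
  eapply is_series_ext; [|replace (- (tau * (45 * tau ^ 2 - 33 * ln (1 + 9 * tau ^ 2))) / (24 * Rpower (1 + 9 * tau ^ 2) (3 / 2))) with (scal tau (bval (tau ^ 2))); [exact H|]].
  - intros n. rewrite pow_add, pow_mult. unfold scal; simpl; unfold mult; simpl. req. ring.
  - change (scal tau (bval (tau ^ 2))) with (tau * bval (tau ^ 2)). assert (Hp := pos9 tau).
    replace (3/2) with (1 + /2) by field. rewrite Rpower_plus, Rpower_1, Rpower_sqrt by auto.
    assert (Hs := sqrt_lt_R0 _ Hp).
    unfold bval, a9, w9, l9. req. field. split; lra.
Qed.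

Lemma ser_d tau : Rabs tau < 1 / 3 ->
  is_series (fun n : nat => dco (S n) * tau ^ (2 * S n))
    (tau ^ 2 * (14 + 36 * tau ^ 2 - 33 * ln (1 + 9 * tau ^ 2)) / (8 * (1 + 9 * tau ^ 2) ^ 2)).
Proof.
  intros Ht. assert (Hx := sq_small tau Ht).
  assert (H := dco_s _ Hx). apply is_pseries_R in H.
  eapply is_series_ext; [|apply (is_series_incr_1 (fun n => dco n * (tau ^ 2) ^ n))].
  - intros n. rewrite pow_mult. reflexivity.
  - replace (plus _ _) with (dval (tau ^ 2)). exact H.
    unfold plus; simpl. rewrite dco_0. assert (Hp := pos9 tau).
    unfold dval, w9, l9. field. lra.
Qed.

Theorem mainTheorem3 :
  exists a b c d : nat -> R,
    (forall m : nat, expansion2 (RbarL (2 * m + 1)) (m + 1) (a m) (b m)) /\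
    (forall n : nat, (1 <= n)%nat -> expansion2 (RbarL (2 * n)) (n + 1) (c n) (d n)) /\
    (forall tau : R, Rabs tau < 1 / 3 ->
       is_series (fun m : nat => b m * tau ^ (2 * m + 1))
         (- (tau * (45 * tau ^ 2 - 33 * ln (1 + 9 * tau ^ 2)))
            / (24 * Rpower (1 + 9 * tau ^ 2) (3 / 2)))
       /\
       is_series (fun n : nat => d (S n) * tau ^ (2 * S n))
         (tau ^ 2 * (14 + 36 * tau ^ 2 - 33 * ln (1 + 9 * tau ^ 2))
            / (8 * (1 + 9 * tau ^ 2) ^ 2))).
Proof.
  exists aco, bco, cco, dco. split; [|split].
  - intros m. apply jet_expansion2.
    pose proof (all_jets (2 * m + 1) ltac:(lia)) as H. unfold Pj in H.
    replace (2 * m + 1)%nat with (S (2 * m)) in * by lia.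
    rewrite Nat.div2_succ_double in H. unfold SA, SB, SC, SD in H.
    rewrite !oddify_odd, !evenify_odd, !Rplus_0_r in H. exact H.
  - intros n Hn. apply jet_expansion2.
    pose proof (all_jets (2 * n) ltac:(lia)) as H. unfold Pj in H.
    rewrite Nat.div2_double in H. unfold SA, SB, SC, SD in H.
    rewrite !oddify_even, !evenify_even, !Rplus_0_l in H. exact H.
  - intros tau Ht. split. apply ser_b; auto. apply ser_d; auto.
Qed.
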